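(* Consider the dynamic panel logit AR(3) model with $T=4$: $(Y^{(0)},X,A)$ has an arbitrary joint distribution with $Y^{(0)}=(Y_{-2},Y_{-1},Y_0)\in\{0,1\}^3$, $X=(X_1,\dots,X_4)\in\mathbb{R}^{K\times4}$, $A\in\mathbb{R}$, and conditionally on $(Y^{(0)},X,A)$ the outcomes $Y=(Y_1,\dots,Y_4)$ satisfy, for $t\in\{1,\dots,4\}$, $$\Pr(Y_t=1\mid Y_{-2},\dots,Y_{t-1},X,A)=\frac{\exp(X_t'\beta_0+\sum_{\ell=1}^3Y_{t-\ell}\gamma_{0,\ell}+A)}{1+\exp(X_t'\beta_0+\sum_{\ell=1}^3Y_{t-\ell}\gamma_{0,\ell}+A)},$$ with true parameters $\beta_0\in\mathbb{R}^K$, $\gamma_0=(\gamma_{0,1},\gamma_{0,2},\gamma_{0,3})$. Let $x_{ts}=x_t-x_s$ and for $y\in\{0,1\}^4$, $\gamma=(\gamma_1,\gamma_2,\gamma_3)$ define $$m(y,x,\beta,\gamma)=\begin{cases}-e^{\gamma_1}&y=(0,0,1,0),\\ -1&y=(0,0,1,1),\\ e^{x_{32}'\beta-\gamma_3}[e^{\gamma_1}-e^{\gamma_2}]&y=(0,1,0,0),\\ e^{\gamma_1-\gamma_2}-1&y=(0,1,0,1),\\ -1&(y_1,y_2,y_3)=(0,1,1),\\ e^{x_{31}'\beta+\gamma_2-\gamma_2}&(y_1,y_2,y_3)=(1,0,0),\\ e^{x_{21}'\beta+\gamma_1-\gamma_2+\gamma_3}&(y_1,y_2,y_3)=(1,0,1),\\0&\text{otherwise}.\end{cases}$$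 Assume that for all $\epsilon>0$, $\Pr(Y^{(0)}=(0,1,0),\|X_3-X_4\|\le\epsilon)>0$, and that the expectation below is well-defined. Then $$\mathbb{E}\big[m(Y,X,\beta_0,(\gamma_{0,1},\gamma_2,\gamma_{0,3}))\mid Y^{(0)}=(0,1,0),X_3=X_4\big]=0$$ if and only if $\gamma_2=\gamma_{0,2}$.
   Context: Expectations are taken under the true data distribution (generated with $\beta_0,\gamma_0$). $Y^{(0)}=(0,1,0)$ means $Y_{-2}=0$, $Y_{-1}=1$, $Y_0=0$. The function $m$ is the paper's $m^{(c,p,4)}_{(0,1,0_{p-2})}$ with $p=3$ (so $\gamma_p=\gamma_3$, $\gamma_{p-1}=\gamma_2$); the entry for $(y_1,y_2,y_3)=(1,0,0)$ equals $e^{x_{31}'\beta}$. *)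

(* Defs.v *)
From HB Require Import structures.
From mathcomp Require Import all_boot all_order all_algebra.
From mathcomp Require Import all_classical all_reals all_analysis.
Set Implicit Arguments. Unset Strict Implicit. Unset Printing Implicit Defensive.
Import Order.TTheory GRing.Theory Num.Theory.
Local Open Scope ring_scope.

Section Logit.
Variable R : realType.
Variable K : nat.

Definition Lambda (z : R) : R := expR z / (1 + expR z).

(* x_t' beta, with t : 'I_4 the 0-based index of period t+1;
   x : 'M_(K,4) has columns x_1,...,x_4 *)
Definition xbeta (x : 'M[R]_(K,4)) (beta : 'cV[R]_K) (t : 'I_4) : R :=
  ((col t x)^T *m beta) ord0 ord0.

Definition xdbeta (x : 'M[R]_(K,4)) (beta : 'cV[R]_K) (t s : 'I_4) : R :=
  ((col t x - col s x)^T *m beta) ord0 ord0.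

(* full outcome path [Y_{-2}; Y_{-1}; Y_0; Y_1; ...; Y_4] *)
Definition path3 (y0 : bool * bool * bool) (y : {ffun 'I_4 -> bool}) : seq bool :=
  [:: y0.1.1; y0.1.2; y0.2; y ord0; y (inord 1); y (inord 2); y (inord 3)].

(* linear index of period t+1:  x_{t+1}'b + sum_l Y_{t+1-l} g_l + a *)
Definition lindex (y0 : bool * bool * bool) (y : {ffun 'I_4 -> bool})
    (x : 'M[R]_(K,4)) (a : R) (beta : 'cV[R]_K) (g1 g2 g3 : R) (t : 'I_4) : R :=
  let s := path3 y0 y in
  xbeta x beta t
  + g1 * (nth false s (t + 2)%N)%:R
  + g2 * (nth false s (t + 1)%N)%:R
  + g3 * (nth false s t)%:R + a.

Definition prob_y (y0 : bool * bool * bool) (x : 'M[R]_(K,4)) (a : R)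
    (beta : 'cV[R]_K) (g1 g2 g3 : R) (y : {ffun 'I_4 -> bool}) : R :=
  \prod_(t < 4)
    (if y t then Lambda (lindex y0 y x a beta g1 g2 g3 t)
     else 1 - Lambda (lindex y0 y x a beta g1 g2 g3 t)).

Definition m_fun (y : {ffun 'I_4 -> bool}) (x : 'M[R]_(K,4))
    (beta : 'cV[R]_K) (g1 g2 g3 : R) : R :=
  let x32 := xdbeta x beta (inord 2) (inord 1) in
  let x31 := xdbeta x beta (inord 2) (inord 0) in
  let x21 := xdbeta x beta (inord 1) (inord 0) in
  match y ord0, y (inord 1), y (inord 2), y (inord 3) with
  | false, false, true, false => - expR g1
  | false, false, true, true => -1
  | false, true, false, false => expR (x32 - g3) * (expR g1 - expR g2)
  | false, true, false, true => expR (g1 - g2) - 1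
  | false, true, true, _ => -1
  | true, false, false, _ => expR (x31 + g2 - g2)
  | true, false, true, _ => expR (x21 + g1 - g2 + g3)
  | _, _, _, _ => 0
  end.

Definition cond_mean_m (y0 : bool * bool * bool) (x : 'M[R]_(K,4)) (a : R)
    (beta0 : 'cV[R]_K) (g01 g02 g03 : R) (beta : 'cV[R]_K) (g1 g2 g3 : R) : R :=
  \sum_(y : {ffun 'I_4 -> bool})
     m_fun y x beta g1 g2 g3 * prob_y y0 x a beta0 g01 g02 g03 y.

End Logit.

(* Main.v *)
Require Import Defs.
From HB Require Import structures.
From mathcomp Require Import all_boot all_order all_algebra.
From mathcomp Require Import all_classical all_reals all_analysis.
From mathcomp Require Import ring lra.
Import Order.TTheory GRing.Theory Num.Theory.
Local Open Scope ring_scope.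

Definition mk4 (p : bool * bool * bool * bool) : {ffun 'I_4 -> bool} :=
  [ffun i : 'I_4 => nth false [:: p.1.1.1; p.1.1.2; p.1.2; p.2] i].
Definition un4 (y : {ffun 'I_4 -> bool}) : bool * bool * bool * bool :=
  (y ord0, y (inord 1), y (inord 2), y (inord 3)).

Lemma mk4K : cancel mk4 un4.
Proof. by case=> [[[a b] c] e]; rewrite /un4 /mk4 !ffunE /= !inordK. Qed.
Lemma un4K : cancel un4 mk4.
Proof.
move=> y; apply/ffunP => i; rewrite /mk4 /un4 ffunE /=.
case: i => [[|[|[|[|n]]]] Hi] //=.
- by congr (y _); apply: val_inj.
- by congr (y _); apply: val_inj; rewrite /= inordK.
- by congr (y _); apply: val_inj; rewrite /= inordK.
- by congr (y _); apply: val_inj; rewrite /= inordK.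
Qed.

Lemma sum_ffun4 (R : realType) (F : {ffun 'I_4 -> bool} -> R) :
  \sum_(y : {ffun 'I_4 -> bool}) F y =
  \sum_(b0 : bool) \sum_(b1 : bool) \sum_(b2 : bool) \sum_(b3 : bool)
     F (mk4 (b0, b1, b2, b3)).
Proof.
rewrite pair_big /= pair_big /= pair_big /=.
rewrite (reindex mk4); last by exists un4 => y _; [exact: mk4K|exact: un4K].
by apply: eq_bigr => [[[[a b] c] e]] _.
Qed.

Lemma prod4 (R : realType) (F : 'I_4 -> R) :
  \prod_(t < 4) F t = F ord0 * F (inord 1) * F (inord 2) * F (inord 3).
Proof.
rewrite !big_ord_recl big_ord0 mulr1 !mulrA.
by congr (_ * _ * _ * _); congr F; apply: val_inj; rewrite /= inordK.
Qed.

Lemma xdbetaE (R : realType) K (x : 'M[R]_(K,4)) b t s :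
  xdbeta x b t s = xbeta x b t - xbeta x b s.
Proof. by rewrite /xdbeta /xbeta (raddfB (@trmx _ _ _)) mulmxBl !mxE. Qed.

Lemma inord0' : (inord 0 : 'I_4) = ord0.
Proof. by apply: val_inj; rewrite /= inordK. Qed.

Definition Dfun {R : realType} (c0 c1 c2 a g1 g02 g3 h : R) : R :=
 expR (c2 - c1 - g3) * (1 - Lambda (c0 + g02 + a)) * Lambda (c1 + g3 + a)
   * (1 - Lambda (c2 + g1 + a)) * (1 - Lambda (c2 + g02 + a))
 + (expR g1 * (1 - Lambda (c0+g02+a)) * Lambda (c1+g3+a) * (1 - Lambda (c2+g1+a))
      * Lambda (c2+g02+a)
    + expR (c1 - c0 + g1 + g3) * Lambda (c0+g02+a) * (1 - Lambda (c1+g1+g3+a))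
      * Lambda (c2+g02+a)) / (expR h * expR g02).

Ltac pos := repeat first [ apply: addr_gt0 | apply: mulr_gt0 | rewrite invr_gt0
   | apply: ltr01 | apply: expR_gt0 ].

Lemma cm_expand (R : realType) K (x : 'M[R]_(K,4)) a beta0 (g01 g02 g03 h : R) :
  col (inord 2) x = col (inord 3) x ->
  cond_mean_m (false, true, false) x a beta0 g01 g02 g03 beta0 g01 h g03 =
  (expR g02 - expR h) * Dfun (xbeta x beta0 ord0) (xbeta x beta0 (inord 1))
      (xbeta x beta0 (inord 2)) a g01 g02 g03 h.
Proof.
move=> Hc.
have H3 : xbeta x beta0 (inord 3) = xbeta x beta0 (inord 2) by rewrite /xbeta Hc.
rewrite /cond_mean_m sum_ffun4 !big_bool /=.
rewrite /m_fun /prob_y !prod4 /mk4 /lindex /path3 !ffunE /= !inordK //= !xdbetaE !inord0' H3.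
rewrite /Dfun.
move: (xbeta x beta0 ord0) (xbeta x beta0 (inord 1)) (xbeta x beta0 (inord 2)) => c0 c1 c2.
rewrite /Lambda !mulr0 !mulr1 !addr0 !mul0r !add0r.
rewrite !expRD !expRN.
field.
repeat (apply/andP; split).
all: apply: lt0r_neq0; pos.
Qed.

Lemma Lambda_gt0 (R : realType) (z : R) : 0 < Lambda z.
Proof. by rewrite /Lambda divr_gt0 // ?addr_gt0 // expR_gt0. Qed.

Lemma Lambda1_gt0 (R : realType) (z : R) : 0 < 1 - Lambda z.
Proof.
have h : 0 < 1 + expR z by rewrite addr_gt0 // expR_gt0.
have -> : 1 - Lambda z = (1 + expR z)^-1.
  by rewrite /Lambda; field; rewrite lt0r_neq0.
by rewrite invr_gt0.
Qed.

Ltac pos2 := repeat first [ apply: Lambda_gt0 | apply: Lambda1_gt0 | apply: addr_gt0 | apply: mulr_gt0 | rewrite invr_gt0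
   | apply: ltr01 | apply: expR_gt0 ].

Lemma Dfun_gt0 (R : realType) (c0 c1 c2 a g1 g02 g3 h : R) :
  0 < Dfun c0 c1 c2 a g1 g02 g3 h.
Proof. rewrite /Dfun; pos2. Qed.

Theorem theorem3 (R : realType) (K : nat) (d : measure_display)
    (Omega : measurableType d) (Q : probability Omega R)
    (X : Omega -> 'M[R]_(K,4)) (A : Omega -> R)
    (beta0 : 'cV[R]_K) (g01 g02 g03 g2 : R) :
  {ae Q, forall w, col (inord 2) (X w) = col (inord 3) (X w)} ->
  Q.-integrable setT (fun w =>
    (cond_mean_m (false, true, false) (X w) (A w) beta0 g01 g02 g03
                 beta0 g01 g2 g03)%:E) ->
  ((\int[Q]_w (cond_mean_m (false, true, false) (X w) (A w) beta0 g01 g02 g03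
                 beta0 g01 g2 g03)%:E = 0)%E <-> g2 = g02).
Proof.
move=> Hae Hint.
pose f := fun w => cond_mean_m (false,true,false) (X w) (A w) beta0 g01 g02 g03 beta0 g01 g2 g03.
have {}Hint : Q.-integrable setT (fun w => (f w)%:E) by exact: Hint.
change ((\int[Q]_w (f w)%:E = 0)%E <-> g2 = g02).
set D := fun w => Dfun (xbeta (X w) beta0 ord0) (xbeta (X w) beta0 (inord 1))
      (xbeta (X w) beta0 (inord 2)) (A w) g01 g02 g03 g2.
have Hf : {ae Q, forall w, f w = (expR g02 - expR g2) * D w}.
  by apply: filterS Hae => w Hw; rewrite /f /D cm_expand.
have Dpos w : 0 < D w by exact: Dfun_gt0.
have QT : (0 < Q setT)%E by rewrite probability_setT lte01.
have PF := ae_properfilter_algebraOfSetsType QT.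
have mf := measurable_int _ Hint.
split; last first.
  move=> E; rewrite (ae_eq_integral (cst 0%E)) //.
    by rewrite integral0.
  rewrite /ae_eq; apply: filterS Hf => w Hw _; by rewrite /= Hw E subrr mul0r.
move=> I0.
set c := expR g02 - expR g2.
have [c0|cn0] := eqVneq c 0.
  by apply: expR_inj; apply/eqP; rewrite eq_sym -subr_eq0; apply/eqP.
exfalso.
pose g := fun w => (c%:E * (f w)%:E)%E.
have ig : Q.-integrable setT g by exact: integrableZl.
have mg := measurable_int _ ig.
have iag := integrable_abse ig.
have mag := measurable_int _ iag.
have Ig : (\int[Q]_w g w = 0)%E by rewrite /g integralZl // I0 mule0.
have Iag : (\int[Q]_w `|g w| = 0)%E.
  rewrite -Ig; apply/esym; rewrite (ae_eq_integral (fun w => `|g w|)%E) //.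
  rewrite /ae_eq; apply: filterS Hf => w Hw _; rewrite /g Hw -EFinM gee0_abs // lee_fin.
  by rewrite mulrA -expr2 mulr_ge0 // ?sqr_ge0 // ltW.
have := (ae_eq_integral_abs _ measurableT mg).1 Iag.
move=> H0.
have : {ae Q, forall w, False}.
  move: H0; rewrite /ae_eq => H0.
  apply: (@filterS2 _ _ _ _ _ _ _ H0 Hf) => w /(_ I) /= Hg Hw.
  move: Hg; rewrite /g Hw -EFinM => /eqP; rewrite eqe mulrA -expr2 => /eqP.
  by apply/eqP; rewrite mulf_neq0 // ?sqrf_eq0 // lt0r_neq0.
exact: (@filter_const _ _ PF False).
Qed.
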